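(* For every quasi-poset $T=(A,\le_T)$, $\varepsilon'\circ\phi_{ehr_{-1}}(T)=1$ and \[\phi_{ehr_{-1}}(T)=\sum_{f\in L'(T)}\big(f^{-1}(1),\ldots,f^{-1}(\max(f))\big).\]
   Context: $\mathcal{T}op[A]$ is spanned by quasi-orders $T=(A,\le_T)$ on the finite set $A$; $x\sim_T y$ iff $x\le_T y$ and $y\le_T x$; $cl(T)$ is the number of $\sim_T$-classes. $\mathcal{C}omp[A]$ has basis the set compositions $(A_1,\ldots,A_k)$ of $A$ (nonempty pairwise disjoint blocks, union $A$); $\varepsilon'(A_1,\ldots,A_k)=\delta_{k,1}$ for $k\ge1$ and $\varepsilon'(\emptyset)=1$. Let $\phi(T)=\sum_{f\in L(T)}(f^{-1}(1),\ldots,f^{-1}(\max f))$, where $L(T)$ is the set of surjections $f:A\to\{1,\ldots,\max f\}$ with $a\le_T b\Rightarrow f(a)\le f(b)$ and ($a\le_T b$, $f(a)=f(b)$) $\Rightarrow a\sim_T b$; $L'(T)$ is the set of surjections $f$ with only the first condition. Let $\iota_{-1}(T)=(-1)^{cl(T)}T$ and $\theta_{-1}(A_1,\ldots,A_n)=(-1)^n\sum_{p\ge0}\sum_{1\le i_1<\cdots<i_p<n}(A_1\sqcup\cdots\sqcup A_{i_1},\ldots,A_{i_p+1}\sqcup\cdots\sqcup A_n)$ (with $\theta_{-1}(\emptyset)=\emptyset$). Define $\phi_{ehr_{-1}}=\theta_{-1}\circ\phi\circ\iota_{-1}$ (note $\theta_{-1}\circ\theta_{-1}=Id$). *)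

(* Defs.v *)
From mathcomp Require Import all_boot all_order all_algebra.
Set Implicit Arguments. Unset Strict Implicit. Unset Printing Implicit Defensive.
Import GRing.Theory.
Local Open Scope ring_scope.

Section Defs.
Variable A : finType.

Definition quasi_order (T : rel A) : Prop := reflexive T /\ transitive T.

Definition cl (T : rel A) : nat :=
  #|[set [set y | T x y && T y x] | x : A]|.

Definition is_comp (s : seq {set A}) : bool :=
  [&& all (fun X : {set A} => X != set0) s,
      pairwise (fun X Y : {set A} => [disjoint X & Y]) s &
      \bigcup_(X <- s) X == [set: A]].

(* Elements of Comp[A] (with integer coefficients): coefficient functions,
   meant to be supported on set compositions of A. *)
Definition compvec := seq {set A} -> int.

(* finite sum over all set compositions of A (they have at most #|A| blocks) *)
Definition sum_comps (F : seq {set A} -> int) : int :=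
  \sum_(n < #|A|.+1) \sum_(t : n.-tuple {set A} | is_comp t) F (val t).

(* Surjections f : A -> {1..max f}; since max f <= #|A|, values lie in 'I_(#|A|.+1). *)
Definition fmax (f : {ffun A -> 'I_#|A|.+1}) : nat := \max_(a : A) val (f a).

Definition is_surj (f : {ffun A -> 'I_#|A|.+1}) : bool :=
  [forall a, (0 < val (f a))%N] &&
  all (fun j => [exists a, val (f a) == j]) (iota 1 (fmax f)).

Definition inLp (T : rel A) (f : {ffun A -> 'I_#|A|.+1}) : bool :=
  is_surj f && [forall a, forall b, T a b ==> (val (f a) <= val (f b))%N].

Definition inL (T : rel A) (f : {ffun A -> 'I_#|A|.+1}) : bool :=
  inLp T f &&
  [forall a, forall b, (T a b && (val (f a) == val (f b))) ==> (T a b && T b a)].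

Definition comp_of (f : {ffun A -> 'I_#|A|.+1}) : seq {set A} :=
  [seq [set a | val (f a) == j] | j <- iota 1 (fmax f)].

Definition phi (T : rel A) : compvec :=
  fun C => (#|[set f | inL T f & comp_of f == C]|)%:Z.

(* merge consecutive blocks; cut k = true means a cut after block number k (1-based) *)
Fixpoint merge (D : seq {set A}) (cut : nat -> bool) (acc : {set A}) (k : nat)
  : seq {set A} :=
  match D with
  | [::] => [::]
  | [:: X] => [:: acc :|: X]
  | X :: D' => if cut k then (acc :|: X) :: merge D' cut set0 k.+1
               else merge D' cut (acc :|: X) k.+1
  end.

(* coarsening of D = (A_1,...,A_n) along the cut set {i_1<...<i_p} in {1..n-1},
   encoded as a subset I of 'I_(n-1) (i in I <-> cut after block i+1) *)
Definition coarsen (D : seq {set A}) (I : {set 'I_(size D).-1}) : seq {set A} :=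
  merge D (fun k => [exists i in I, (val i).+1 == k]) set0 1.

Definition theta_basis (D : seq {set A}) : compvec :=
  fun C => (-1) ^+ (size D) *
           (#|[set I : {set 'I_(size D).-1} | @coarsen D I == C]|)%:Z.

Definition theta (v : compvec) : compvec :=
  fun C => sum_comps (fun D => v D * theta_basis D C).

(* iota_{-1} on a basis quasi-order, then linear phi: phi(iota(T)) = (-1)^cl(T) phi(T) *)
Definition phi_ehr (T : rel A) : compvec :=
  theta (fun C => (-1) ^+ (cl T) * phi T C).

Definition eps' (v : compvec) : int :=
  sum_comps (fun C => v C * ((size C == 1%N) || (C == [::]))%:R).

Definition phi_Lp (T : rel A) : compvec :=
  fun C => (#|[set f | inLp T f & comp_of f == C]|)%:Z.

End Defs.

(* Main.v *)
From mathcomp Require Import all_boot all_order all_algebra zify.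
From Stdlib Require Import FunctionalExtensionality.
Require Import Defs.
Set Implicit Arguments. Unset Strict Implicit. Unset Printing Implicit Defensive.
Import GRing.Theory.

Local Close Scope ring_scope.

Lemma max_attained (I : finType) (P : pred I) (F : I -> nat) :
  0 < \max_(i | P i) F i -> exists2 i, P i & \max_(i | P i) F i = F i.
Proof.
case: (pickP P) => [i0 Pi0|P0] H.
- rewrite (bigmax_eq_arg _ Pi0); case: arg_maxnP => // j Pj _; by exists j.
- by rewrite big_pred0 in H.
Qed.

Section KeyLemma.
Variable A : finType.
Variable T : rel A.
Hypothesis Trefl : reflexive T.
Hypothesis Ttr : transitive T.

Local Notation N := #|A|.+1.
Local Notation FF := {ffun A -> 'I_N}.

Definition nf (f : FF) : A -> nat := fun a => f a.

Lemma nf_inj : injective nf.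
Proof. move=> f g E; apply/ffunP=> a; apply/val_inj; exact: (congr1 (fun h => h a) E). Qed.

Definition mk (h : A -> nat) : FF := [ffun a => inord (h a)].

Lemma nf_mk h : (forall a, h a < N) -> nf (mk h) = h.
Proof. move=> H; apply: functional_extensionality => a; by rewrite /nf ffunE inordK. Qed.

Definition goodn (S : {set A}) (h : A -> nat) (m : nat) : Prop :=
  [/\ forall a, a \notin S -> h a = 0,
      forall a, a \in S -> 0 < h a <= m,
      forall j, 0 < j <= m -> exists2 a, a \in S & h a = j,
      forall a b, a \in S -> b \in S -> T a b -> h a <= h b &
      forall a b, a \in S -> b \in S -> T a b -> h a = h b -> T b a].

Definition goodb (S : {set A}) (f : FF) (m : nat) : bool :=
  [&& [forall a, (a \notin S) ==> (f a == 0 :> nat)],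
      [forall a, (a \in S) ==> (0 < f a <= m)],
      all (fun j => [exists a, (a \in S) && (f a == j :> nat)]) (iota 1 m),
      [forall a, forall b, [&& a \in S, b \in S & T a b] ==> (f a <= f b)] &
      [forall a, forall b, [&& a \in S, b \in S, T a b & (f a == f b :> nat)] ==> T b a]].

Lemma goodP S f m : reflect (goodn S (nf f) m) (goodb S f m).
Proof.
rewrite /nf.
apply: (iffP and5P) => [[/forallP H1 /forallP H2 /allP H3 /forallP H4 /forallP H5]|[H1 H2 H3 H4 H5]]; split.
- by move=> a aS; apply/eqP; move/implyP: (H1 a); apply.
- by move=> a aS; move/implyP: (H2 a); apply.
- move=> j hj. have: j \in iota 1 m by rewrite mem_iota; lia.
  move/H3/existsP=> [a /andP[aS /eqP ea]]; by exists a.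
- move=> a b aS bS tab; move/forallP: (H4 a) => /(_ b)/implyP; apply; by rewrite aS bS tab.
- move=> a b aS bS tab eab; move/forallP: (H5 a) => /(_ b)/implyP; apply; by rewrite aS bS tab eab eqxx.
- apply/forallP=> a; apply/implyP=> /H1 ->. done.
- apply/forallP=> a; apply/implyP=> /H2. done.
- apply/allP=> j; rewrite mem_iota => hj. have [a aS ea] := H3 j ltac:(lia).
  apply/existsP; exists a; by rewrite aS ea eqxx.
- apply/forallP=> a; apply/forallP=> b; apply/implyP=> /and3P[aS bS tab]; exact: H4.
- apply/forallP=> a; apply/forallP=> b; apply/implyP=> /and4P[aS bS tab /eqP eab]; exact: H5.
Qed.

Lemma goodn_le S h m : goodn S h m -> forall a, h a <= m.
Proof. case=> H1 H2 _ _ _ a. case: (boolP (a \in S)) => [/H2|/H1->//]; lia. Qed.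

Lemma goodn_mx S h m : goodn S h m -> \max_(a in S) h a = m.
Proof.
move=> G; have Hle := goodn_le G; case: G => H1 H2 H3 _ _.
apply/eqP; rewrite eqn_leq; apply/andP; split.
- apply/bigmax_leqP => a _; exact: Hle.
- case: m H3 Hle {H2} => [//|m] H3 _. have [a aS <-] := H3 m.+1 ltac:(lia). exact: leq_bigmax_cond.
Qed.

Lemma goodn_card S h m : goodn S h m -> m <= #|S|.
Proof.
case=> _ _ H3 _ _.
rewrite -(size_iota 1 m) -(size_image h S). apply: uniq_leq_size; first exact: iota_uniq.
move=> j; rewrite mem_iota => hj. have [a aS <-] := H3 j ltac:(lia). exact: image_f.
Qed.

Lemma goodn_bound S h m : goodn S h m -> forall a, h a < N.
Proof.
move=> G a; have := goodn_le G a; have := goodn_card G; have : #|S| <= #|A| := max_card _. lia.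
Qed.

Lemma goodn_ext S h h' m : h =1 h' -> goodn S h m -> goodn S h' m.
Proof. by move=> /functional_extensionality <-. Qed.

Definition mxS (S : {set A}) (f : FF) : nat := \max_(a in S) (f a : nat).

Lemma goodb_mx S f m : goodb S f m -> mxS S f = m.
Proof. move/goodP; exact: goodn_mx. Qed.

Lemma mk_good S h m : goodn S h m -> nf (mk h) = h /\ goodb S (mk h) (mxS S (mk h)).
Proof.
move=> G. have E := nf_mk (goodn_bound G). split=> //.
have G' : goodb S (mk h) m by apply/goodP; rewrite E.
by rewrite (goodb_mx G').
Qed.

Definition W (S : {set A}) : int :=
  \sum_(f : FF | goodb S f (mxS S f)) (-1) ^+ (mxS S f).

Definition clS (S : {set A}) : nat := #|[set [set y in S | T x y && T y x] | x in S]|.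

Lemma exists_max (S : {set A}) : S != set0 ->
  exists2 x, x \in S & forall y, y \in S -> T x y -> T y x.
Proof.
case/set0Pn => x1 x1S.
pose up x := [set y in S | T x y].
have [x xS xmin] := arg_minnP (fun x => #|up x|) x1S.
exists x => // y yS txy.
have sub : up y \subset up x.
  apply/subsetP=> z; rewrite !inE => /andP[zS tyz]; by rewrite zS (Ttr txy tyz).
have eq : up y = up x by apply/eqP; rewrite eqEcard sub xmin.
have : x \in up y by rewrite eq inE Trefl andbT; exact: xS.
by rewrite inE => /andP[].
Qed.

End KeyLemma.

Local Close Scope ring_scope.

Section Step.
Variable A : finType.
Variable T : rel A.
Hypothesis Trefl : reflexive T.
Hypothesis Ttr : transitive T.
Variable S : {set A}.
Variable x0 : A.
Hypothesis x0S : x0 \in S.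
Hypothesis x0max : forall y, y \in S -> T x0 y -> T y x0.

Definition X := [set y in S | T x0 y && T y x0].

Lemma inX a : (a \in X) = [&& a \in S, T x0 a & T a x0].
Proof. by rewrite in_set andbA. Qed.

Lemma XS a : a \in X -> a \in S.
Proof. by rewrite inX => /and3P[]. Qed.

Lemma x0X : x0 \in X.
Proof. by rewrite inX x0S Trefl. Qed.

Lemma X_up a b : a \in X -> b \in S -> T a b -> b \in X.
Proof.
rewrite !inX => /and3P[aS t0a ta0] bS tab.
have t0b := Ttr t0a tab. by rewrite bS t0b (x0max bS t0b).
Qed.

Lemma X_T a b : a \in X -> b \in X -> T a b.
Proof. rewrite !inX => /and3P[_ _ ta0] /and3P[_ t0b _]; exact: Ttr ta0 t0b. Qed.

Lemma X_pre a b : b \in X -> T a b -> T a x0.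
Proof. rewrite inX => /and3P[_ _ tb0] tab; exact: Ttr tab tb0. Qed.

Lemma goodX h m : goodn T S h m -> forall a, a \in X -> h a = h x0.
Proof.
case=> _ _ _ H4 _ a aX. have aS := XS aX.
apply/eqP; rewrite eqn_leq (H4 _ _ aS x0S (X_T aX x0X)) (H4 _ _ x0S aS (X_T x0X aX)).
done.
Qed.

Definition sig (h : A -> nat) a := h a + ((h x0 < h a) || (a \in X)).
Definition mu (h : A -> nat) a := h a - (h x0 <= h a).
Definition rho (h : A -> nat) a := if a \in X then 0 else h a - (h x0 < h a).
Definition pmax (g : A -> nat) := \max_(b | (b \in S :\: X) && T b x0) g b.
Definition tau (g : A -> nat) a := if a \in X then (pmax g).+1 else g a + (pmax g < g a).

Definition P1 (h : A -> nat) := [exists b, (b \in S :\: X) && (h b == h x0)].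
Definition Pp (h : A -> nat) := [exists b, [&& b \in S, T b x0 & (h b == (h x0).-1)]].
Definition P2 (h : A -> nat) := ~~ P1 h && ((1 < h x0) && ~~ Pp h).
Definition P3 (h : A -> nat) := ~~ P1 h && ~~ ((1 < h x0) && ~~ Pp h).

Lemma sig_good h m : goodn T S h m -> P1 h ->
  [/\ goodn T S (sig h) m.+1, P2 (sig h) & mu (sig h) = h].
Proof.
move=> G /existsP[b1 /andP[]]; rewrite in_setD => /andP[b1X b1S] /eqP hb1.
have hX := goodX G. have G0 := G. case: G0 => H1 H2 H3 H4 H5.
have sx0 : sig h x0 = (h x0).+1 by rewrite /sig x0X orbT; lia.
have sX a : a \in X -> sig h a = (h x0).+1 by move=> aX; rewrite /sig aX orbT (hX _ aX); lia.
have sN a : a \notin X -> sig h a = h a + (h x0 < h a) by move=> aX; rewrite /sig (negbTE aX) orbF.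
split.
- split.
  + move=> a aS. have aX : a \notin X by apply: contra aS; exact: XS.
    by rewrite sN // H1.
  + move=> a aS. case: (boolP (a \in X)) => aX; [rewrite sX //| rewrite sN //];
    have := H2 _ aS; have := H2 _ x0S; lia.
  + move=> j hj. have := H2 _ x0S => hx.
    case: (ltngtP j (h x0)) => cj.
    * have [a aS ea] := H3 j ltac:(lia). exists a => //.
      have aX : a \notin X by apply/negP => aX; move: (hX _ aX); lia.
      rewrite sN // ea. lia.
    * case: (ltngtP j (h x0).+1) => cj'; first lia.
      - have [a aS ea] := H3 j.-1 ltac:(lia). exists a => //.
        have aX : a \notin X by apply/negP => aX; move: (hX _ aX); lia.
        rewrite sN // ea. lia.
      - exists x0 => //. by rewrite sx0.
    * exists b1 => //. by rewrite sN // hb1 ltnn cj addn0.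
  + move=> a b aS bS tab. case: (boolP (a \in X)) => aX.
    * have bX := X_up aX bS tab. by rewrite sX // sX.
    * have := H4 _ _ aS bS tab. rewrite sN //. rewrite /sig. case: (b \in X); lia.
  + move=> a b aS bS tab. case: (boolP (a \in X)) => aX.
    * have bX := X_up aX bS tab. by move=> _; apply: X_T.
    * have := H4 _ _ aS bS tab. case: (boolP (b \in X)) => bX.
      - rewrite sN // sX //. have := hX _ bX. lia.
      - rewrite !sN // => hab e. apply: H5 => //. lia.
- apply/and3P; split.
  + apply/existsP => -[b /andP[]]. rewrite in_setD => /andP[bX bS].
    rewrite sx0 sN //. lia.
  + rewrite sx0. have := H2 _ x0S. lia.
  + apply/existsP => -[b /and3P[bS tb0]]. rewrite sx0 /=.
    case: (boolP (b \in X)) => bX.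
    * rewrite sX //. lia.
    * rewrite sN //. have := H4 _ _ bS x0S tb0 => le. move=> /eqP e.
      have e' : h b = h x0 by lia.
      have := H5 _ _ bS x0S tb0 e'. move=> t0b. by rewrite inX bS tb0 t0b in bX.
- apply: functional_extensionality => a. rewrite /mu sx0.
  case: (boolP (a \in X)) => aX.
  + rewrite sX // (hX _ aX). lia.
  + rewrite sN //. lia.
Qed.


Lemma mu_good h m : goodn T S h m -> P2 h ->
  [/\ goodn T S (mu h) m.-1, P1 (mu h), sig (mu h) = h & 0 < m].
Proof.
move=> G /and3P[nP1 v1 nPp].
have hX := goodX G. have G0 := G. case: G0 => H1 H2 H3 H4 H5.
have hx := H2 _ x0S.
have nv a : a \in S -> a \notin X -> h a != h x0.
  move=> aS aX; apply/negP => /eqP e; move/negP: nP1; apply; apply/existsP; exists a.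
  by rewrite in_setD aX aS e eqxx.
have mx0 : mu h x0 = (h x0).-1 by rewrite /mu leqnn; lia.
split.
- split.
  + move=> a aS. by rewrite /mu H1 //; lia.
  + move=> a aS. have := H2 _ aS. rewrite /mu. lia.
  + move=> j hj.
    case: (ltngtP j (h x0).-1) => cj.
    * have [a aS ea] := H3 j ltac:(lia). exists a => //. rewrite /mu ea. lia.
    * have [a aS ea] := H3 j.+1 ltac:(lia). exists a => //. rewrite /mu ea. lia.
    * exists x0 => //. by rewrite mx0 cj.
  + move=> a b aS bS tab. have := H4 _ _ aS bS tab. rewrite /mu. lia.
  + move=> a b aS bS tab. have := H4 _ _ aS bS tab. rewrite /mu => le e.
    case: (ltngtP (h a) (h b)) => c; last by apply: H5.
    * have ea : h a = (h x0).-1 by lia.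
      have eb : h b = h x0 by lia.
      case: (boolP (b \in X)) => bX; last by move: (nv _ bS bX); rewrite eb eqxx.
      have ta0 := X_pre bX tab.
      move/negP: nPp; case; apply/existsP; exists a. by rewrite aS ta0 ea eqxx.
    * lia.
- have [a aS ea] := H3 (h x0).-1 ltac:(lia).
  apply/existsP; exists a. rewrite in_setD aS andbT mx0 /mu ea.
  have aX : a \notin X by apply/negP => aX; move: (hX _ aX); lia.
  rewrite aX /=. apply/eqP; lia.
- apply: functional_extensionality => a. rewrite /sig mx0 /mu.
  case: (boolP (a \in X)) => aX.
  + rewrite (hX _ aX) orbT. lia.
  + rewrite orbF. case: (boolP (a \in S)) => aS.
    * have := nv _ aS aX. lia.
    * rewrite H1 //. lia.
Qed.


Lemma pm_ge g b : b \in S :\: X -> T b x0 -> g b <= pmax g.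
Proof. move=> bS tb; apply: (@leq_bigmax_cond _ (fun b => (b \in S :\: X) && T b x0)); by rewrite bS tb. Qed.

Lemma pm_le g m : goodn T (S :\: X) g m -> pmax g <= m.
Proof. move=> G; apply/bigmax_leqP => b _; exact: goodn_le G b. Qed.

Lemma pm_att g : 0 < pmax g -> exists2 b, (b \in S :\: X) && T b x0 & pmax g = g b.
Proof. exact: max_attained. Qed.

Lemma rho_good h m : goodn T S h m -> P3 h ->
  [/\ goodn T (S :\: X) (rho h) m.-1, tau (rho h) = h & 0 < m].
Proof.
move=> G /andP[nP1 nP2].
have hX := goodX G. have G0 := G. case: G0 => H1 H2 H3 H4 H5.
have hx := H2 _ x0S.
have nv a : a \in S -> a \notin X -> h a != h x0.
  move=> aS aX; apply/negP => /eqP e; move/negP: nP1; apply; apply/existsP; exists a.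
  by rewrite in_setD aX aS e eqxx.
have rN a : a \notin X -> rho h a = h a - (h x0 < h a) by move=> aX; rewrite /rho (negbTE aX).
have Gr : goodn T (S :\: X) (rho h) m.-1.
  split.
  + move=> a; rewrite in_setD negb_and negbK => /orP[aX|aS]; first by rewrite /rho aX.
    rewrite /rho H1 //; case: (a \in X) => //; lia.
  + move=> a; rewrite in_setD => /andP[aX aS]. rewrite rN //.
    have := nv _ aS aX. have := H2 _ aS. lia.
  + move=> j hj.
    case: (ltnP j (h x0)) => cj.
    * have [a aS ea] := H3 j ltac:(lia).
      have aX : a \notin X by apply/negP => aX; move: (hX _ aX); lia.
      exists a; first by rewrite in_setD aX aS. rewrite rN // ea. lia.
    * have [a aS ea] := H3 j.+1 ltac:(lia).
      have aX : a \notin X by apply/negP => aX; move: (hX _ aX); lia.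
      exists a; first by rewrite in_setD aX aS. rewrite rN // ea. lia.
  + move=> a b; rewrite !in_setD => /andP[aX aS] /andP[bX bS] tab.
    have := H4 _ _ aS bS tab. rewrite !rN //. lia.
  + move=> a b; rewrite !in_setD => /andP[aX aS] /andP[bX bS] tab.
    have := H4 _ _ aS bS tab. have := nv _ aS aX. have := nv _ bS bX. rewrite !rN // => n1 n2 le e.
    apply: H5 => //. lia.
have pm : pmax (rho h) = (h x0).-1.
  apply/eqP; rewrite eqn_leq; apply/andP; split.
  + apply/bigmax_leqP => b /andP[]; rewrite in_setD => /andP[bX bS] tb0.
    have := H4 _ _ bS x0S tb0. have := nv _ bS bX. rewrite rN //. lia.
  + case: (boolP (1 < h x0)) => v1; last by lia.
    have : Pp h by move: nP2; rewrite v1 /= negbK.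
    case/existsP => b /and3P[bS tb0 /eqP eb].
    have bX : b \notin X by apply/negP => bX; move: (hX _ bX); lia.
    have := @pm_ge (rho h) b ltac:(by rewrite in_setD bX bS) tb0. rewrite rN // eb. lia.
split => //.
apply: functional_extensionality => a. rewrite /tau pm.
case: (boolP (a \in X)) => aX.
- rewrite (hX _ aX). lia.
- rewrite rN //. case: (boolP (a \in S)) => aS.
  + have := nv _ aS aX. lia.
  + rewrite H1 //. lia.
Qed.

Lemma tau_good g m : goodn T (S :\: X) g m ->
  [/\ goodn T S (tau g) m.+1, P3 (tau g) & rho (tau g) = g].
Proof.
move=> G. have G0 := G. case: G0 => H1 H2 H3 H4 H5.
have pl := pm_le G.
have tX a : a \in X -> tau g a = (pmax g).+1 by move=> aX; rewrite /tau aX.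
have tN a : a \notin X -> tau g a = g a + (pmax g < g a) by move=> aX; rewrite /tau (negbTE aX).
have tx0 := tX _ x0X.
have SX a : a \in S -> a \notin X -> a \in S :\: X by move=> aS aX; rewrite in_setD aX aS.
split.
- split.
  + move=> a aS. have aX : a \notin X by apply: contra aS; exact: XS.
    rewrite tN // H1 //; last by rewrite in_setD negb_and aS orbT.
  + move=> a aS. case: (boolP (a \in X)) => aX; first by rewrite tX //; lia.
    rewrite tN //. have := H2 _ (SX _ aS aX). lia.
  + move=> j hj. case: (ltngtP j (pmax g).+1) => cj.
    * have [a aS ea] := H3 j ltac:(lia). move: aS; rewrite in_setD => /andP[aX aS].
      exists a => //. rewrite tN // ea. lia.
    * have [a aS ea] := H3 j.-1 ltac:(lia). move: aS; rewrite in_setD => /andP[aX aS].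
      exists a => //. rewrite tN // ea. lia.
    * exists x0 => //. by rewrite tx0 cj.
  + move=> a b aS bS tab. case: (boolP (a \in X)) => aX.
    * by rewrite tX // tX //; apply: X_up aX bS tab.
    * case: (boolP (b \in X)) => bX.
      - rewrite tN // tX //. have := @pm_ge g a (SX _ aS aX) (X_pre bX tab). lia.
      - rewrite !tN //. have := H4 _ _ (SX _ aS aX) (SX _ bS bX) tab. lia.
  + move=> a b aS bS tab. case: (boolP (a \in X)) => aX.
    * by move=> _; apply: X_T => //; apply: X_up aX bS tab.
    * case: (boolP (b \in X)) => bX.
      - rewrite tN // tX //. have := @pm_ge g a (SX _ aS aX) (X_pre bX tab). lia.
      - rewrite !tN // => e. have := H4 _ _ (SX _ aS aX) (SX _ bS bX) tab => le.
        apply: H5 => //; try exact: SX. lia.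
- apply/andP; split.
  + apply/existsP => -[b /andP[]]. rewrite in_setD => /andP[bX bS].
    rewrite tx0 tN //. lia.
  + rewrite tx0 negb_and negbK. case: (posnP (pmax g)) => p0; first by rewrite p0.
    have [b /andP[bSX tb0] eb] := pm_att p0.
    apply/orP; right; apply/existsP; exists b.
    move: (bSX); rewrite in_setD => /andP[bX bS].
    rewrite bS tb0 tN // -eb ltnn /=. apply/eqP; lia.
- apply: functional_extensionality => a. rewrite /rho tx0.
  case: (boolP (a \in X)) => aX.
  + rewrite H1 //. by rewrite in_setD aX.
  + rewrite tN //. lia.
Qed.

End Step.

Local Open Scope ring_scope.

Section Sums.
Variable A : finType.
Variable T : rel A.
Hypothesis Trefl : reflexive T.
Hypothesis Ttr : transitive T.

Local Notation N := #|A|.+1.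
Local Notation FF := {ffun A -> 'I_N}.

Lemma mk_nf (f : FF) : mk (nf f) = f.
Proof. apply/ffunP => a; apply/val_inj; by rewrite /mk ffunE /nf inord_val. Qed.

Lemma goodE S (f : FF) m : goodn T S (nf f) m -> goodb T S f (mxS S f) /\ mxS S f = m.
Proof.
move=> G. have e : mxS S f = m by exact: goodn_mx G.
rewrite e; split => //; exact/goodP.
Qed.

Lemma goodI S (f : FF) : goodb T S f (mxS S f) -> goodn T S (nf f) (mxS S f).
Proof. by move/goodP. Qed.

Lemma mk_goodE S h m : goodn T S h m ->
  [/\ nf (mk h) = h, goodb T S (mk h) (mxS S (mk h)) & mxS S (mk h) = m].
Proof.
move=> G. have [e _] := mk_good G.
have G' : goodn T S (nf (mk h)) m by rewrite e.
have [g1 g2] := goodE G'. by split.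
Qed.

Variable S : {set A}.
Variable x0 : A.
Hypothesis x0S : x0 \in S.
Hypothesis x0max : forall y, y \in S -> T x0 y -> T y x0.

Local Notation X := (X T S x0).
Definition sigF (f : FF) := mk (sig T S x0 (nf f)).
Definition muF (f : FF) := mk (mu x0 (nf f)).
Definition rhoF (f : FF) := mk (rho T S x0 (nf f)).
Definition tauF (f : FF) := mk (tau T S x0 (nf f)).

Definition G1 f := goodb T S f (mxS S f) && P1 T S x0 (nf f).
Definition G2 f := goodb T S f (mxS S f) && P2 T S x0 (nf f).
Definition G3 f := goodb T S f (mxS S f) && P3 T S x0 (nf f).

Lemma sumG2 : \sum_(f | G2 f) ((-1) ^+ mxS S f : int) = - \sum_(f | G1 f) ((-1) ^+ mxS S f : int).
Proof.
rewrite (reindex_onto sigF muF).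
- rewrite -sumrN. apply: congr_big => // g.
  + apply/idP/idP.
    * move=> /andP[/andP[Gs P2s] /eqP e].
      have Gs' := goodI Gs.
      have [Gm P1m sm m0] := mu_good Trefl Ttr x0S Gs' P2s.
      have [e1 e2 e3] := mk_goodE Gm.
      rewrite -e /G1. rewrite /muF e1 e2 P1m. done.
    * move=> /andP[Gg P1g]. have Gg' := goodI Gg.
      have [Gs P2s ms] := sig_good Trefl Ttr x0S x0max Gg' P1g.
      have [e1 e2 e3] := mk_goodE Gs.
      rewrite /G2 /sigF e1 e2 P2s /=. apply/eqP. rewrite /muF e1 ms mk_nf. done.
  + move=> /andP[/andP[Gs P2s] /eqP e]. have Gs' := goodI Gs.
    have [Gm P1m sm m0] := mu_good Trefl Ttr x0S Gs' P2s.
    have [e1 e2 e3] := mk_goodE Gm.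
    rewrite -{2}e /muF e3. case: (mxS S (sigF g)) m0 => // n _. rewrite exprS mulN1r. done.
- move=> f /andP[Gf P2f]. have Gf' := goodI Gf.
  have [Gm P1m sm m0] := mu_good Trefl Ttr x0S Gf' P2f.
  have [e1 e2 e3] := mk_goodE Gm.
  by rewrite /sigF /muF e1 sm mk_nf.
Qed.

Lemma sumG3 : \sum_(f | G3 f) ((-1) ^+ mxS S f : int) = - W T (S :\: X).
Proof.
rewrite (reindex_onto tauF rhoF).
- rewrite /W -sumrN. apply: congr_big => // g.
  + apply/idP/idP.
    * move=> /andP[/andP[Gs P3s] /eqP e].
      have Gs' := goodI Gs.
      have [Gm sm m0] := rho_good Trefl Ttr x0S Gs' P3s.
      have [e1 e2 e3] := mk_goodE Gm.
      by rewrite -e /rhoF e2.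
    * move=> Gg. have Gg' := goodI Gg.
      have [Gs P3s ms] := tau_good Trefl Ttr x0S x0max Gg'.
      have [e1 e2 e3] := mk_goodE Gs.
      rewrite /G3 /tauF e1 e2 P3s /=. apply/eqP. rewrite /rhoF e1 ms mk_nf. done.
  + move=> /andP[/andP[Gs P3s] /eqP e]. have Gs' := goodI Gs.
    have [Gm sm m0] := rho_good Trefl Ttr x0S Gs' P3s.
    have [e1 e2 e3] := mk_goodE Gm.
    rewrite -{2}e /rhoF e3. case: (mxS S (tauF g)) m0 => // n _. rewrite exprS mulN1r. done.
- move=> f /andP[Gf P3f]. have Gf' := goodI Gf.
  have [Gm sm m0] := rho_good Trefl Ttr x0S Gf' P3f.
  have [e1 e2 e3] := mk_goodE Gm.
  by rewrite /tauF /rhoF e1 sm mk_nf.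
Qed.

Lemma W_step : W T S = - W T (S :\: X).
Proof.
rewrite /W (bigID (fun f => P1 T S x0 (nf f))) /=.
rewrite [X in _ + X](bigID (fun f => (1 < nf f x0)%N && ~~ Pp T S x0 (nf f))) /=.
transitivity (\sum_(f | G1 f) ((-1) ^+ mxS S f : int) + (\sum_(f | G2 f) ((-1) ^+ mxS S f : int)
   + \sum_(f | G3 f) ((-1) ^+ mxS S f : int))).
  congr (_ + (_ + _)); apply: eq_bigl => f.
  - by rewrite /G2 /P2 -!andbA.
  - by rewrite /G3 /P3 -!andbA.
rewrite sumG2 sumG3 addrA addrN add0r. done.
Qed.

End Sums.

Local Open Scope ring_scope.

Section KFinal.
Variable A : finType.
Variable T : rel A.
Hypothesis Trefl : reflexive T.
Hypothesis Ttr : transitive T.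

Local Notation N := #|A|.+1.
Local Notation FF := {ffun A -> 'I_N}.

Lemma clS_step (S : {set A}) x0 : x0 \in S -> (forall y, y \in S -> T x0 y -> T y x0) ->
  clS T S = (clS T (S :\: X T S x0)).+1.
Proof.
move=> x0S x0max.
have cX x : x \in (X T S x0) -> [set y in S | T x y && T y x] = (X T S x0).
  move=> xX; apply/setP => y; rewrite [in LHS]in_set.
  apply/idP/idP.
  - move=> /and3P[yS txy tyx]. exact: (@X_up A T Ttr S x0 x0max x y xX yS txy).
  - move=> yX. apply/and3P; split; [exact: XS yX | exact: (@X_T A T Ttr S x0 x y xX yX) | exact: (@X_T A T Ttr S x0 y x yX xX)].
have cN x : x \in S :\: (X T S x0) -> [set y in S | T x y && T y x] = [set y in S :\: (X T S x0) | T x y && T y x].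
  rewrite in_setD => /andP[xX xS]; apply/setP => y; rewrite !in_set.
  case: (boolP (y \in S)) => yS //=; rewrite ?andbT.
  case: (boolP (T x0 y && T y x0)) => Hy //=.
  apply/negP => /andP[txy tyx]. move/negP: xX; apply.
  have yX : y \in X T S x0 by rewrite in_set yS Hy.
  exact: (@X_up A T Ttr S x0 x0max y x yX xS tyx).
have E : [set [set y in S | T x y && T y x] | x in S] =
         (X T S x0) |: [set [set y in S :\: (X T S x0) | T x y && T y x] | x in S :\: (X T S x0)].
  apply/setP => C; rewrite in_setU1; apply/imsetP/orP.
  - move=> [x xS ->]. case: (boolP (x \in (X T S x0))) => xX; first by left; rewrite cX.
    right; apply/imsetP; exists x; first by rewrite in_setD xX xS.
    by rewrite cN // in_setD xX xS.
  - case=> [/eqP ->|/imsetP[x xSX ->]].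
    + by exists x0.
    + exists x; first by move: xSX; rewrite in_setD => /andP[].
      by rewrite cN.
rewrite /clS E cardsU1.
suff -> : (X T S x0) \notin [set [set y in S :\: (X T S x0) | T x y && T y x] | x in S :\: (X T S x0)] by [].
apply/imsetP => -[x xSX eX].
have x0X' := @x0X A T Trefl S x0 x0S.
have : x0 \in (X T S x0) by [].
rewrite eX in_set in_setD => /andP[/andP[nx _] _]. by rewrite x0X' in nx.
Qed.

Definition f0 : FF := mk (fun _ => 0%N).

Lemma W0 : W T set0 = 1.
Proof.
rewrite /W.
have mx0 f : mxS set0 f = 0%N by rewrite /mxS big_set0.
have E : forall f, goodb T set0 f (mxS set0 f) = (f == f0).
  move=> f; rewrite mx0. apply/idP/eqP.
  - move/goodP => [H1 _ _ _ _]. apply: nf_inj. rewrite /f0 nf_mk //.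
    apply: functional_extensionality => a. by rewrite H1 // inE.
  - move=> ->. apply/goodP. rewrite /f0 nf_mk //. split => //; try lia; by move=> a; rewrite inE.
rewrite (eq_bigl _ _ E) big_pred1_eq mx0. done.
Qed.

Lemma clS0 : clS T set0 = 0%N.
Proof. by rewrite /clS imset0 cards0. Qed.

Lemma K_all n (S : {set A}) : (#|S| <= n)%N -> W T S = (-1) ^+ clS T S.
Proof.
elim: n S => [|n IH] S hS.
  have -> : S = set0 by apply/eqP; rewrite -cards_eq0; lia.
  by rewrite W0 clS0.
case: (eqVneq S set0) => [->|Sn0]; first by rewrite W0 clS0.
have [x0 x0S x0max] := exists_max Trefl Ttr Sn0.
rewrite (W_step Trefl Ttr x0S x0max) (clS_step x0S x0max) IH.
  by rewrite exprS mulN1r.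
have sub : S :\: X T S x0 \subset S :\ x0.
  apply/subsetP => y; rewrite in_setD => /andP[yX yS]. rewrite !inE yS andbT.
  apply/eqP => e; move: yX; by rewrite e (@x0X A T Trefl S x0 x0S).
have := subset_leq_card sub. have := cardsD1 x0 S. rewrite x0S. lia.
Qed.

End KFinal.

Local Open Scope ring_scope.

Section KeyInL.
Variable A : finType.
Local Notation N := #|A|.+1.
Local Notation FF := {ffun A -> 'I_N}.

Lemma fmax_ge (f : FF) a : (f a <= fmax f)%N.
Proof. exact: (@leq_bigmax _ (fun a => val (f a)) a). Qed.

Lemma is_surjP (f : FF) :
  reflect ((forall a, 0 < f a)%N /\ forall j, (0 < j <= fmax f)%N -> exists a, f a = j :> nat)
          (is_surj f).
Proof.
apply: (iffP andP) => [[/forallP H1 /allP H2]|[H1 H2]]; split => //.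
- move=> j hj. have : j \in iota 1 (fmax f) by rewrite mem_iota; lia.
  by move/H2/existsP => [a /eqP e]; exists a.
- by apply/forallP.
- apply/allP => j; rewrite mem_iota => hj. have [a e] := H2 j ltac:(lia).
  by apply/existsP; exists a; apply/eqP.
Qed.

Lemma fmax_mxS (f : FF) : fmax f = mxS setT f.
Proof. by rewrite /fmax /mxS; apply: eq_bigl => a; rewrite in_setT. Qed.

Variable T : rel A.

Lemma inLP (f : FF) : reflect (goodn T setT (nf f) (fmax f)) (inL T f).
Proof.
rewrite /inL /inLp /nf.
apply: (iffP idP).
- move=> /andP[/andP[/is_surjP[H1 H2] /forallP H3] /forallP H4]. split.
  + by move=> a; rewrite in_setT.
  + move=> a _. by rewrite H1 fmax_ge.
  + move=> j hj. have [a e] := H2 j hj. by exists a; rewrite ?in_setT.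
  + move=> a b _ _ tab. by move/forallP: (H3 a) => /(_ b)/implyP; apply.
  + move=> a b _ _ tab e. move/forallP: (H4 a) => /(_ b)/implyP.
    have e' : val (f a) == val (f b) by apply/eqP.
    by rewrite tab e' => /(_ isT)/andP[].
- move=> [H1 H2 H3 H4 H5]. apply/andP; split; first (apply/andP; split).
  + apply/is_surjP; split.
    * by move=> a; have := H2 a (in_setT a) => /andP[].
    * move=> j hj. have [a _ e] := H3 j hj. by exists a.
  + apply/forallP => a; apply/forallP => b; apply/implyP => tab. exact: H4.
  + apply/forallP => a; apply/forallP => b; apply/implyP => /andP[tab /eqP e].
    by rewrite tab (H5 a b).
Qed.

Lemma inL_good (f : FF) : inL T f = goodb T setT f (mxS setT f).
Proof.
rewrite -fmax_mxS. apply/idP/idP => [/inLP H|/goodP H]; [exact/goodP | exact/inLP].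
Qed.

Lemma cl_clS : cl T = clS T setT.
Proof.
rewrite /cl /clS. apply: eq_card => C. apply/imsetP/imsetP => -[x _ ->]; exists x => //.
- by apply/setP => y; rewrite !inE.
- by apply/setP => y; rewrite !inE.
Qed.

Lemma key_lemma : quasi_order T ->
  \sum_(f : FF | inL T f) ((-1) ^+ fmax f : int) = (-1) ^+ cl T.
Proof.
move=> [Tr Tt].
rewrite cl_clS -(K_all Tr Tt (leqnn _)) /W.
apply: congr_big => // f; first by rewrite inL_good.
by rewrite fmax_mxS.
Qed.

End KeyInL.

Local Open Scope ring_scope.

Section Comps.
Variable A : finType.
Local Notation N := #|A|.+1.
Local Notation FF := {ffun A -> 'I_N}.

Lemma size_comp (f : FF) : size (comp_of f) = fmax f.
Proof. by rewrite size_map size_iota. Qed.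

Lemma nth_comp (f : FF) p : (p < fmax f)%N -> nth set0 (comp_of f) p = [set a | val (f a) == p.+1].
Proof. move=> hp. by rewrite (nth_map 0%N) ?size_iota // nth_iota // add1n. Qed.

Lemma fmax_le (f : FF) : (fmax f <= #|A|)%N.
Proof. apply/bigmax_leqP => a _ /=. rewrite -ltnS. exact: ltn_ord. Qed.

Lemma comp_is_comp (f : FF) : is_surj f -> is_comp (comp_of f).
Proof.
move=> /is_surjP[H1 H2]. apply/and3P; split.
- apply/allP => X /mapP[j]; rewrite mem_iota => hj ->.
  have [a e] := H2 j ltac:(lia). apply/set0Pn; exists a. by rewrite inE /= e.
- rewrite pairwise_map. apply: (@sub_pairwise _ ltn).
    move=> i j /= lij. rewrite -setI_eq0. apply/eqP/setP => a; rewrite !inE /=.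
    apply/negP => /andP[/eqP e1 /eqP e2]. lia.
  by rewrite -sorted_pairwise ?iota_ltn_sorted //; exact: ltn_trans.
- apply/eqP/setP => a. rewrite in_setT bigcup_seq. apply/bigcupP.
  exists [set b | val (f b) == val (f a)]; last by rewrite inE.
  apply/mapP; exists (val (f a)) => //. rewrite mem_iota /=. by rewrite H1 add1n ltnS fmax_ge.
Qed.

Lemma tuple_pick (s : seq {set A}) n (Q : pred (seq {set A})) (x : seq {set A} -> int) :
  \sum_(t : n.-tuple {set A} | Q t) (if s == t then x t else 0) =
  if (size s == n) && Q s then x s else 0.
Proof.
case: (eqVneq (size s) n) => [e|ne] /=.
- have e' : size s == n by apply/eqP.
  pose t0 : n.-tuple {set A} := Tuple e'.
  case: (boolP (Q s)) => Qs.
  + rewrite (bigD1 t0) //= eqxx big1 ?addr0 // => t /andP[Qt nt].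
    case: eqP => // est. move/eqP: nt; case. by apply: val_inj.
  + apply: big1 => t Qt. case: eqP => // est. by rewrite est Qt in Qs.
- apply: big1 => t _. case: eqP => // est. by rewrite est size_tuple eqxx in ne.
Qed.

Lemma sum_comps_card (P : pred FF) (G : seq {set A} -> int) :
  (forall f, P f -> is_surj f) ->
  sum_comps (fun D => (#|[set f | P f & comp_of f == D]|)%:Z * G D) = \sum_(f | P f) G (comp_of f).
Proof.
move=> PS. rewrite /sum_comps.
have E n (t : n.-tuple {set A}) : (#|[set f | P f & comp_of f == t]|)%:Z * G t =
    \sum_(f | P f) (if comp_of f == t then G t else 0).
  rewrite -natz mulr_natl -sumr_const -big_mkcondr. apply: eq_bigl => f. by rewrite inE.
under eq_bigr => n _ do (under eq_bigr => t _ do rewrite E; rewrite exchange_big /=).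
rewrite exchange_big /=. apply: eq_bigr => f Pf.
under eq_bigr => n _ do rewrite tuple_pick.
have hs : (size (comp_of f) < N)%N by rewrite size_comp ltnS fmax_le.
rewrite (bigD1 (Ordinal hs)) //= eqxx comp_is_comp ?PS //= big1 ?addr0 // => n ne.
case: eqP => // e. move: ne. case/negP. apply/eqP/val_inj => /=. done.
Qed.

End Comps.

Local Close Scope ring_scope.

Definition grp (c : nat -> bool) (k p : nat) : nat := \sum_(q < p) c (k + q).

Lemma grp0 c k : grp c k 0 = 0.
Proof. by rewrite /grp big_ord0. Qed.

Lemma grpSl c k p : grp c k p.+1 = c k + grp c k.+1 p.
Proof. rewrite /grp big_ord_recl /= addn0. congr (_ + _). apply: eq_bigr => i _. by rewrite /bump /= add1n addSnnS. Qed.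

Lemma grpSr c k p : grp c k p.+1 = grp c k p + c (k + p).
Proof. by rewrite /grp big_ord_recr. Qed.

Lemma grp_le c k p : grp c k p <= p.
Proof. elim: p => [|p IH]; first by rewrite grp0. rewrite grpSr. case: (c _); lia. Qed.

Lemma grp_mono c k p q : p <= q -> grp c k p <= grp c k q.
Proof.
move=> /subnK <-. elim: (q - p) => [|d IH]; first by rewrite add0n.
rewrite addSn grpSr. lia.
Qed.

Lemma has_iota0S (P : pred nat) n : has P (iota 0 n.+1) = P 0 || has (fun q => P q.+1) (iota 0 n).
Proof. rewrite /= -[1]/(1 + 0) iotaDl has_map. congr (_ || _). Qed.

Lemma merge_cons2 (A : finType) (X Y : {set A}) D c acc k :
  Defs.merge (X :: Y :: D) c acc k =
  if c k then (acc :|: X) :: Defs.merge (Y :: D) c set0 k.+1 else Defs.merge (Y :: D) c (acc :|: X) k.+1.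
Proof. by []. Qed.

Lemma merge_spec (A : finType) (D : seq {set A}) c acc k : D != [::] ->
  size (Defs.merge D c acc k) = (grp c k (size D).-1).+1 /\
  forall r a, r < size (Defs.merge D c acc k) ->
     (a \in nth set0 (Defs.merge D c acc k) r) =
     ((r == 0) && (a \in acc)) || has (fun p => (grp c k p == r) && (a \in nth set0 D p)) (iota 0 (size D)).
Proof.
elim: D acc k => [//|X D IH] acc k _. case: D IH => [|Y D] IH.
  split; first by rewrite grp0.
  move=> r a /=; rewrite ltnS leqn0 => /eqP -> /=. by rewrite grp0 in_setU orbF.
have [IHs IHn] := IH set0 k.+1 isT.
have [IHs' IHn'] := IH (acc :|: X) k.+1 isT.
rewrite merge_cons2. case ck: (c k).
- split; first by rewrite /= IHs grpSl ck.
  move=> [|r] a.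
  + move=> _ /=. rewrite in_setU grp0 /=.
    have g1 p : 0 < p -> grp c k p != 0 by case: p => // p _; rewrite grpSl ck.
    rewrite (negbTE (g1 1 isT)) /=.
    rewrite [has _ _](_ : _ = false) ?orbF //.
    apply/hasP => -[p]; rewrite mem_iota => hp /andP[/eqP e _]. have := g1 p ltac:(lia). by rewrite e.
  + move=> hr. have hr' : r < size (Defs.merge (Y :: D) c set0 k.+1) by [].
    rewrite (_ : nth set0 ((acc :|: X) :: Defs.merge (Y :: D) c set0 k.+1) r.+1 = nth set0 (Defs.merge (Y :: D) c set0 k.+1) r) //.
    rewrite IHn // in_set0 andbF orFb.
    rewrite [in RHS]has_iota0S grp0 (_ : (0 == r.+1) = false) // andFb orFb. apply: eq_has => q /=. by rewrite grpSl ck add1n eqSS.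
- split; first by rewrite IHs' /= grpSl ck.
  move=> r a hr. rewrite IHn' // [in RHS]has_iota0S grp0 in_setU.
  have -> : has (fun q => (grp c k q.+1 == r) && (a \in nth set0 [:: X, Y & D] q.+1)) (iota 0 (size D).+1)
     = has (fun q => (grp c k.+1 q == r) && (a \in nth set0 (Y :: D) q)) (iota 0 (size (Y :: D))).
    apply: eq_has => q /=. by rewrite grpSl ck.
  rewrite [0 == r]eq_sym. by case: (r == 0); case: (a \in acc); case: (a \in X).
Qed.

Local Close Scope ring_scope.

Lemma grp_ivt c k n r : r <= grp c k n -> exists2 p, p <= n & grp c k p = r.
Proof.
elim: n r => [|n IH] r.
  rewrite grp0 leqn0 => /eqP ->. by exists 0; rewrite ?grp0.
move=> hr. case: (leqP r (grp c k n)) => h.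
  have [p hp e] := IH r h. exists p => //. lia.
exists n.+1 => //. move: hr h; rewrite grpSr. case: (c _) => /=; lia.
Qed.

Lemma merge_nil (A : finType) (D : seq {set A}) c acc k : size D = 0 -> Defs.merge D c acc k = [::].
Proof. by case: D. Qed.

Section Coarsen.
Variable A : finType.
Local Notation N := #|A|.+1.
Local Notation FF := {ffun A -> 'I_N}.

Definition cutI n (I : {set 'I_n}) := fun k : nat => [exists i in I, (val i).+1 == k].

Lemma cutI_val n (I : {set 'I_n}) j (hj : j < n) : cutI I (1 + j) = (Ordinal hj \in I).
Proof.
apply/existsP/idP => [[i /andP[iI /eqP e]]|iI].
- have -> : Ordinal hj = i. apply/val_inj => /=. move: e. rewrite add1n. by case => ->.
  done.
- exists (Ordinal hj). by rewrite iI /= add1n eqxx.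
Qed.

Definition gfun (f : FF) (c : nat -> bool) : FF := mk (fun a => (grp c 1 (f a).-1).+1).

Lemma gfun_val (f : FF) c : is_surj f -> forall a, (gfun f c a : nat) = (grp c 1 (f a).-1).+1.
Proof.
move=> /is_surjP[H1 _] a. rewrite /gfun /mk ffunE inordK //.
have := grp_le c 1 (f a).-1. have := H1 a. have := ltn_ord (f a). move: (nat_of_ord (f a)) => x. lia.
Qed.

Lemma fmax_gfun (f : FF) c : is_surj f -> fmax (gfun f c) = if fmax f == 0 then 0 else (grp c 1 (fmax f).-1).+1.
Proof.
move=> fs. have gv := gfun_val c fs. move: (fs) => /is_surjP[H1 H2].
case: eqP => [m0|m0].
  apply/eqP; rewrite -leqn0; apply/bigmax_leqP => a _. have := H1 a. have := fmax_ge f a. lia.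
apply/eqP; rewrite eqn_leq; apply/andP; split.
- apply/bigmax_leqP => a _ /=. rewrite gv ltnS. apply: grp_mono. have := fmax_ge f a. lia.
- have [a e] := H2 (fmax f) ltac:(lia). have := fmax_ge (gfun f c) a. by rewrite gv e.
Qed.

Lemma coarsen_comp (f : FF) (I : {set 'I_(size (comp_of f)).-1}) :
  is_surj f -> coarsen I = comp_of (gfun f (cutI I)).
Proof.
move=> fs. have gv := gfun_val (cutI I) fs. move: (fs) => /is_surjP[H1 H2].
have fg := fmax_gfun (cutI I) fs.
rewrite /coarsen.
case: (eqVneq (fmax f) 0) => m0.
  rewrite merge_nil; last by rewrite size_comp.
  rewrite [in RHS]/comp_of fg (_ : (fmax f == 0) = true) //; exact/eqP.
have Dn : comp_of f != [::] by rewrite -size_eq0 size_comp.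
have sz := size_comp f.
have [ms mn] := merge_spec (fun k => [exists i in I, (val i).+1 == k]) set0 1 Dn.
have ec : grp (cutI I) 1 (size (comp_of f)).-1 = grp (cutI I) 1 (fmax f).-1 := congr1 (grp (cutI I) 1) (congr1 predn sz).
apply: (@eq_from_nth _ set0).
  by rewrite ms ec [size (comp_of (gfun _ _))]size_comp fg (negbTE m0).
move=> r hr. have hr' := hr. rewrite ms ec in hr'.
apply/setP => a. rewrite mn // nth_comp; last by rewrite fg (negbTE m0).
rewrite in_set0 andbF /= inE /= gv eqSS.
apply/hasP/idP.
- move=> [p]; rewrite mem_iota => hp /andP[/eqP e].
  rewrite nth_comp; last by lia.
  rewrite inE /= => /eqP fa. by rewrite fa /= e.
- move=> /eqP e. exists (f a).-1.
    rewrite mem_iota. have := H1 a. have := fmax_ge f a. move: (nat_of_ord (f a)) => x. lia.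
  rewrite e eqxx /= nth_comp.
    rewrite inE /=. have := H1 a. move: (nat_of_ord (f a)) => x. move=> h1. apply/eqP. lia.
  have := H1 a. have := fmax_ge f a. move: (nat_of_ord (f a)) => x. lia.
Qed.

End Coarsen.

Local Close Scope ring_scope.

Section Bij.
Variable A : finType.
Local Notation N := #|A|.+1.
Local Notation FF := {ffun A -> 'I_N}.

Definition compat (f g : FF) : bool := [forall a, forall b, (g a < g b) ==> (f a < f b)].

Lemma compatP (f g : FF) : reflect (forall a b, g a < g b -> f a < f b) (compat f g).
Proof.
apply: (iffP forallP) => [H a b|H a]; first by move/forallP: (H a) => /(_ b)/implyP.
apply/forallP => b; apply/implyP; exact: H.
Qed.

Variable f : FF.
Hypothesis fs : is_surj f.
Local Notation n := (size (comp_of f)).-1.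

Lemma sz : n = (fmax f).-1.
Proof. by rewrite size_comp. Qed.

Lemma gfun_good (I : {set 'I_n}) : is_surj (gfun f (cutI I)) && compat f (gfun f (cutI I)).
Proof.
have gv := gfun_val (cutI I) fs. have fg := fmax_gfun (cutI I) fs.
move: (fs) => /is_surjP[H1 H2].
apply/andP; split.
- apply/is_surjP; split; first by move=> a; rewrite gv.
  move=> j hj. move: hj. rewrite fg. case: eqP => [m0|m0] hj; first lia.
  have [p hp e] := @grp_ivt (cutI I) 1 (fmax f).-1 j.-1 ltac:(lia).
  have [a ea] := H2 p.+1 ltac:(lia).
  exists a. rewrite gv ea /= e. lia.
- apply/compatP => a b. rewrite !gv ltnS => lt.
  have : ~~ ((f b).-1 <= (f a).-1).
    apply/negP => le; have := grp_mono (cutI I) 1 le. lia.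
  have := H1 a; have := H1 b. move: (nat_of_ord (f a)) (nat_of_ord (f b)) => x y. lia.
Qed.

Lemma gfun_inj : injective (fun I : {set 'I_n} => gfun f (cutI I)).
Proof.
move=> I J /= e. have gvI := gfun_val (cutI I) fs. have gvJ := gfun_val (cutI J) fs.
move: (fs) => /is_surjP[H1 H2].
apply/setP => i. have hi : i < (fmax f).-1 by rewrite -sz; exact: ltn_ord.
have [a ea] := H2 i.+1 ltac:(lia).
have [b eb] := H2 i.+2 ltac:(lia).
have EI : (gfun f (cutI I) b : nat) = (gfun f (cutI I) a : nat) + (i \in I).
  rewrite gvI gvI ea eb /= grpSr (cutI_val I (ltn_ord i)) (_ : Ordinal (ltn_ord i) = i); last exact: val_inj.
  lia.
have EJ : (gfun f (cutI J) b : nat) = (gfun f (cutI J) a : nat) + (i \in J).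
  rewrite gvJ gvJ ea eb /= grpSr (cutI_val J (ltn_ord i)) (_ : Ordinal (ltn_ord i) = i); last exact: val_inj.
  lia.
move: EI EJ. rewrite e. case: (i \in I); case: (i \in J) => //=; lia.
Qed.

Lemma gfun_onto (g : FF) : is_surj g -> compat f g -> exists I : {set 'I_n}, g = gfun f (cutI I).
Proof.
move=> /is_surjP[G1 G2] /compatP C.
move: (fs) => /is_surjP[H1 H2].
have Cle a b : f a <= f b -> g a <= g b.
  move=> le; rewrite leqNgt; apply/negP => /C; lia.
pose I := [set i : 'I_n | [exists a, exists b, [&& f a == i.+1 :> nat, f b == i.+2 :> nat & g a < g b]]].
exists I. apply/ffunP => a; apply/val_inj => /=. rewrite gfun_val //.
suff H : forall j a, f a = j.+1 :> nat -> g a = (grp (cutI I) 1 j).+1 :> nat.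
  apply: H. have := H1 a. move: (nat_of_ord (f a)) => x. lia.
elim=> [|j IH] {}a fa.
- rewrite grp0. apply/eqP; rewrite eqn_leq G1 andbT leqNgt; apply/negP => lt.
  have [b eb] := G2 1 ltac:(have := fmax_ge g a; lia).
  have := C b a ltac:(lia). have := H1 b. lia.
- have hj : j < n by rewrite sz; have := fmax_ge f a; lia.
  have [a' ea'] := H2 j.+1 ltac:(have := fmax_ge f a; lia).
  have ga' := IH a' ea'.
  rewrite grpSr add1n -[j.+1]add1n (cutI_val I hj).
  have le : g a' <= g a by apply: Cle; lia.
  case: (boolP (Ordinal hj \in I)) => iI.
  + move: (iI); rewrite inE => /existsP[x /existsP[y /and3P[/eqP fx /eqP fy gxy]]].
    have gx : g x = g a' :> nat by apply/eqP; rewrite eqn_leq !Cle //= fx ea'.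
    have gy : g y = g a :> nat by apply/eqP; rewrite eqn_leq !Cle //= fy fa.
    have lt : g a' < g a by rewrite -gx -gy.
    have : g a <= (g a').+1.
      rewrite leqNgt; apply/negP => lt2.
      have [z ez] := G2 (g a').+1 ltac:(have := fmax_ge g a; lia).
      have := C z a ltac:(lia). rewrite fa => fz.
      have := Cle z a' ltac:(lia). lia.
    lia.
  + have : ~~ (g a' < g a).
      apply/negP => lt; move/negP: iI; apply. rewrite inE; apply/existsP; exists a'; apply/existsP; exists a.
      by rewrite /= ea' fa !eqxx lt.
    lia.
Qed.

Lemma card_coarsen (C : seq {set A}) :
  #|[set I : {set 'I_n} | coarsen I == C]| =
  #|[set g : FF | [&& is_surj g, compat f g & comp_of g == C]]|.
Proof.
have E : [set g : FF | [&& is_surj g, compat f g & comp_of g == C]] =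
         [set gfun f (cutI I) | I in [set I : {set 'I_n} | coarsen I == C]].
  apply/setP => g; rewrite inE; apply/idP/imsetP.
  - move=> /and3P[gs gc gC]. have [I eI] := gfun_onto gs gc.
    exists I => //. by rewrite inE (coarsen_comp I fs) -eI.
  - move=> [I]; rewrite inE (coarsen_comp I fs) => /eqP <- ->. by rewrite eqxx andbT gfun_good.
rewrite E card_in_imset //. move=> I J _ _; exact: gfun_inj.
Qed.

End Bij.

Local Open Scope ring_scope.

Section Final.
Variable A : finType.
Variable T : rel A.
Hypothesis HT : quasi_order T.
Local Notation N := #|A|.+1.
Local Notation FF := {ffun A -> 'I_N}.

Definition monoT (g : FF) : bool := [forall a, forall b, T a b ==> (g a <= g b)%N].

Lemma sign_sq n : ((-1) ^+ n * (-1) ^+ n = 1 :> int).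
Proof. by rewrite -exprD addnn -mul2n exprM sqrrN !expr1n. Qed.

Lemma main_inner (g : FF) :
  (-1) ^+ cl T * \sum_(f : FF | inL T f && compat f g) ((-1) ^+ fmax f : int) = (monoT g)%:R.
Proof.
case: (boolP (monoT g)) => mg.
- have Mg a b : T a b -> (g a <= g b)%N.
    by move=> tab; move/forallP: mg => /(_ a)/forallP/(_ b)/implyP; apply.
  pose T' := fun a b => T a b || (g a < g b)%N.
  have [Tr Tt] := HT.
  have HT' : quasi_order T'.
    split; first by move=> a; rewrite /T' Tr.
    move=> b a c; rewrite /T' => /orP[tab|gab] /orP[tbc|gbc]; apply/orP.
    + by left; apply: Tt tab tbc.
    + right; have := Mg _ _ tab; lia.
    + right; have := Mg _ _ tbc; lia.
    + right; lia.
  have EL f : inL T' f = inL T f && compat f g.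
    apply/idP/idP.
    - move/inLP => [H1 H2 H3 H4 H5]. apply/andP; split.
      + apply/inLP; split => //; first by move=> a b aS bS tab; apply: H4 => //; rewrite /T' tab.
        move=> a b aS bS tab e.
        have := H5 a b aS bS (introT orP (or_introl tab)) e. rewrite /T' => /orP[//|lt].
        have := Mg _ _ tab. lia.
      + apply/compatP => a b lt.
        have t' : T' a b by rewrite /T' lt orbT.
        have := H4 a b (in_setT a) (in_setT b) t'. rewrite /nf leq_eqVlt => /orP[/eqP e|//].
        have := H5 a b (in_setT a) (in_setT b) t' e. rewrite /T' => /orP[tba|lt2].
        * have := Mg _ _ tba. lia.
        * lia.
    - move=> /andP[/inLP[H1 H2 H3 H4 H5] /compatP C]. apply/inLP; split => // a b aS bS.
      + rewrite /T' => /orP[tab|lt]; first exact: H4.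
        have := C a b lt. rewrite /nf. lia.
      + rewrite /T' => /orP[tab|lt] e; first by rewrite (H5 a b aS bS tab e).
        have := C a b lt. rewrite /nf in e. lia.
  have Ex x y : (T' x y && T' y x) = (T x y && T y x).
    rewrite /T'. case: (boolP (T x y)) => txy /=; case: (boolP (T y x)) => tyx //=.
    + by have := Mg _ _ txy; rewrite ltnNge => ->.
    + by have := Mg _ _ tyx; rewrite ltnNge => ->.
    + apply/negP => /andP[h1 h2]. have := leq_ltn_trans (ltnW h1) h2. by rewrite ltnn.
  have Ecl : cl T' = cl T.
    rewrite /cl. apply: eq_card => S0. apply/imsetP/imsetP => -[x _ ->]; exists x => //;
    apply/setP => y; rewrite !inE; by rewrite Ex.
  rewrite (eq_bigl (fun f => inL T' f)); last by move=> f; rewrite EL.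
  by rewrite key_lemma // Ecl sign_sq.
- rewrite big_pred0 ?mulr0 // => f. apply/negP => /andP[/inLP[_ _ _ H4 _] /compatP C].
  move/negP: mg; apply. apply/forallP => a; apply/forallP => b; apply/implyP => tab.
  rewrite leqNgt; apply/negP => lt. have := C b a lt. have := H4 a b (in_setT a) (in_setT b) tab.
  rewrite /nf. lia.
Qed.

Lemma inL_surj f : inL T f -> is_surj f.
Proof. by case/andP => /andP[]. Qed.

Lemma inLp_surj f : inLp T f -> is_surj f.
Proof. by case/andP. Qed.

Lemma eq_sum_comps (F G : seq {set A} -> int) : (forall D, F D = G D) -> sum_comps F = sum_comps G.
Proof. move=> E; rewrite /sum_comps; apply: eq_bigr => n _; apply: eq_bigr => t _; exact: E. Qed.

Lemma phi_ehr_eq C : phi_ehr T C = phi_Lp T C.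
Proof.
rewrite /phi_ehr /theta (@eq_sum_comps _ (fun D => (#|[set f | inL T f & comp_of f == D]|)%:Z * ((-1) ^+ cl T * theta_basis D C))); last by move=> D; rewrite /phi -mulrA mulrCA.
rewrite sum_comps_card; last exact: inL_surj.
have E f : inL T f -> (-1) ^+ cl T * theta_basis (comp_of f) C =
   \sum_(g : FF) (if [&& is_surj g, compat f g & comp_of g == C] then (-1) ^+ cl T * (-1) ^+ fmax f else 0).
  move=> Lf. rewrite /theta_basis (card_coarsen (inL_surj Lf)) size_comp mulrA -natz mulr_natr -sumr_const big_mkcond /=.
  apply: eq_bigr => g _. by rewrite inE.
rewrite (eq_bigr _ E) exchange_big /=.
rewrite /phi_Lp -natz -sumr_const [RHS]big_mkcond /=. apply: eq_bigr => g _.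
rewrite inE /inLp -/(monoT g).
case: (boolP (is_surj g && (comp_of g == C))) => gs.
- case/andP: gs => gs eg. rewrite gs eg /= andbT.
  under eq_bigr => f _ do rewrite andbT.
  rewrite -big_mkcondr -mulr_sumr main_inner. by case: (monoT g).
- rewrite big1 => [|f _]; last first.
    by case: (is_surj g) gs; case: (comp_of g == C); rewrite ?andbF.
  by case: (is_surj g) gs; case: (comp_of g == C); rewrite ?andbF.
Qed.

Lemma comp_small (f : FF) : ((size (comp_of f) == 1%N) || (comp_of f == [::])) = (fmax f <= 1)%N.
Proof. rewrite -size_eq0 size_comp. by case: (fmax f) => [|[|n]]. Qed.

Definition f1 : FF := [ffun _ => inord 1].

Lemma f1E a : (f1 a : nat) = 1%N.
Proof.
rewrite /f1 ffunE inordK //. have : (0 < #|A|)%N by apply/card_gt0P; exists a.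
by rewrite ltnS.
Qed.

Lemma fmax_f1 : (fmax f1 <= 1)%N.
Proof. apply/bigmax_leqP => a _ /=. by rewrite f1E. Qed.

Lemma inLp_f1 : inLp T f1.
Proof.
apply/andP; split.
- apply/is_surjP; split; first by move=> a; rewrite f1E.
  move=> j hj. have : (0 < fmax f1)%N by lia.
  move/max_attained => [a _ _]. exists a. rewrite f1E. have := fmax_f1. lia.
- apply/forallP => a; apply/forallP => b; apply/implyP => _ /=. by rewrite !f1E.
Qed.

Lemma eps_Lp : eps' (phi_Lp T) = 1.
Proof.
rewrite /eps' /phi_Lp (sum_comps_card (P := inLp T) (fun C => ((size C == 1%N) || (C == [::]))%:R)); last exact: inLp_surj.
rewrite (bigD1 f1) ?inLp_f1 //= comp_small fmax_f1 big1 ?addr0 // => f /andP[Lf nf1].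
rewrite comp_small. case: leqP => // le. move/negP: nf1; case.
have /is_surjP[H1 _] := inLp_surj Lf.
apply/eqP/ffunP => a; apply/val_inj => /=. rewrite f1E. have := H1 a. have := fmax_ge f a.
move: (nat_of_ord (f a)) => x. lia.
Qed.

End Final.

Theorem proposition58 (A : finType) (T : rel A) (HT : quasi_order T) :
  eps' (phi_ehr T) = 1 /\
  phi_ehr T = phi_Lp T.
Proof.
have E : phi_ehr T = phi_Lp T by apply: functional_extensionality => C; exact: phi_ehr_eq.
split => //. rewrite E. exact: eps_Lp.
Qed.
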